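(* Let $\mathbf X$ be a coin process with $\underline H(\mathbf X)>0$ and $\mathbf Y$ any target process. Then \[ R^\star_{\mathrm{int}}(\mathbf X,\mathbf Y)\le\frac{\overline H(\mathbf Y)}{\underline H(\mathbf X)}, \qquad R^\star(\mathbf X,\mathbf Y)\ge\max\Big[\frac{\overline H(\mathbf Y)}{\overline H(\mathbf X)},\frac{\underline H(\mathbf Y)}{\underline H(\mathbf X)}\Big]. \]
   Context: Logarithms are base 2. $\mathcal X$, $\mathcal Y$ are finite sets; $\mathbf X=\{X^m\}$ (coin) and $\mathbf Y=\{Y^n\}$ (target) are arbitrary processes given by consistent families of distributions. Spectral sup- and inf-entropy: $\overline H(\mathbf X)=\inf\{\lambda:\lim_{n\to\infty}\Pr(\frac1n\log\frac{1}{P_{X^n}(X^n)}\ge\lambda)=0\}$, $\underline H(\mathbf X)=\sup\{\lambda:\lim_{n\to\infty}\Pr(\frac1n\log\frac{1}{P_{X^n}(X^n)}\le\lambda)=0\}$, and likewise for $\mathbf Y$. A random number generation algorithm for $Y^n$ is a map $\phi:\bigcup_{i\ge0}\mathcal X^i\to\{\bot\}\cup\mathcal Y^n$; its leaves are the finite sequences $s$ with $\phi(s)\in\mathcal Y^n$ and $\phi(s')=\bot$ for all proper prefixes $s'$; it is required to satisfy the validity condition $\sum_{\text{leaves } s:\phi(s)=y^n}P_{X^{|s|}}(s)=P_{Y^n}(y^n)$ for all $y^n$. Its stopping time is the length of the (first) leaf reached by $X_1,X_2,\dots$ ($\infty$ if none). For a sequence of algorithms $\phi_n$ ($n=1,2,\dots$)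 generating $Y^n$ with stopping times $T_n$, a rate $R\ge0$ is achievable if $\lim_{n\to\infty}\Pr(T_n>nR)=0$. $R^\star(\mathbf X,\mathbf Y)$ is the infimum of rates achievable by some sequence of valid algorithms, and $R^\star_{\mathrm{int}}(\mathbf X,\mathbf Y)$ the infimum of rates achievable when $\phi_n$ is the interval algorithm. Interval algorithm: for $s\in\mathcal X^i$ define $\mathcal I_s=[\underline\alpha_s,\overline\alpha_s)$ by $\mathcal I_\bot=[0,1)$ and $\underline\alpha_{sx}=\underline\alpha_s+(\overline\alpha_s-\underline\alpha_s)\sum_{k<x}P_{X_{i+1}|X^i}(k|s)$, $\overline\alpha_{sx}=\underline\alpha_s+(\overline\alpha_s-\underline\alpha_s)\sum_{k\le x}P_{X_{i+1}|X^i}(k|s)$ (identifying $\mathcal X=\{1,\dots,M\}$); define $\mathcal J_t$, $t\in\mathcal Y^j$, likewise from $P_{Y_{j+1}|Y^j}$; the algorithm stops at the first $m$ with $\mathcal I_{X^m}\subseteq\mathcal J_{y^n}$ for some $y^n\in\mathcal Y^n$ and outputs that $y^n$. *)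

(* Defs.v *)
From Stdlib Require Import Reals Lra Lia List Arith Bool ClassicalEpsilon.
Import ListNotations.
Open Scope R_scope.

(** Alphabets: a finite set of size M is identified with {0,...,M-1};
    finite sequences are [list nat]. *)

Definition lsum {A : Type} (f : A -> R) (l : list A) : R :=
  fold_right (fun a acc => f a + acc) 0 l.

Fixpoint words (M n : nat) : list (list nat) :=
  match n with
  | O => [[]]
  | S k => flat_map (fun s => map (fun x => s ++ [x]) (seq 0 M)) (words M k)
  end.

(** A process over {0,...,M-1}, given by a consistent family of
    distributions: P s = P_{X^{|s|}}(s). *)
Definition is_process (M : nat) (P : list nat -> R) : Prop :=
  P [] = 1 /\ (forall s, 0 <= P s) /\
  (forall s, lsum (fun x => P (s ++ [x])) (seq 0 M) = P s).

Definition log2 (x : R) : R := ln x / ln 2.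

Definition PrGe (M : nat) (P : list nat -> R) (n : nat) (lam : R) : R :=
  lsum (fun s => if Rlt_dec 0 (P s) then
                   if Rle_dec lam (/ INR n * log2 (/ P s)) then P s else 0
                 else 0) (words M n).
Definition PrLe (M : nat) (P : list nat -> R) (n : nat) (lam : R) : R :=
  lsum (fun s => if Rlt_dec 0 (P s) then
                   if Rle_dec (/ INR n * log2 (/ P s)) lam then P s else 0
                 else 0) (words M n).

Definition is_inf (S : R -> Prop) (h : R) : Prop :=
  (forall x, S x -> h <= x) /\ (forall b, (forall x, S x -> b <= x) -> b <= h).
Definition is_sup (S : R -> Prop) (h : R) : Prop :=
  (forall x, S x -> x <= h) /\ (forall b, (forall x, S x -> x <= b) -> h <= b).

Definition is_sup_entropy (M : nat) (P : list nat -> R) (h : R) : Prop :=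
  is_inf (fun lam => Un_cv (fun n => PrGe M P n lam) 0) h.
Definition is_inf_entropy (M : nat) (P : list nat -> R) (h : R) : Prop :=
  is_sup (fun lam => Un_cv (fun n => PrLe M P n lam) 0) h.

(** "inf S <= r" and "inf S >= r" for the infimum in the extended reals
    (inf of the empty set = +infinity), written out literally. *)
Definition inf_le (S : R -> Prop) (r : R) : Prop :=
  forall eps, 0 < eps -> exists x, S x /\ x < r + eps.
Definition inf_ge (S : R -> Prop) (r : R) : Prop :=
  forall x, S x -> r <= x.

(** Random number generation algorithms: None stands for ⊥. *)
Definition algo := list nat -> option (list nat).

Definition is_noneb (o : option (list nat)) : bool :=
  match o with None => true | Some _ => false end.

Definition leafb (phi : algo) (s : list nat) : bool :=
  andb (negb (is_noneb (phi s)))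
   (forallb (fun j => is_noneb (phi (firstn j s))) (seq 0 (length s))).

Definition outputs (phi : algo) (s y : list nat) : bool :=
  match phi s with
  | Some y' => if list_eq_dec Nat.eq_dec y' y then true else false
  | None => false
  end.

(** phi is a valid algorithm generating Y^n from X:
    phi maps into {⊥} ∪ Y^n, and for every y^n the total coin
    probability of the leaves outputting y^n equals P_Y(y^n)
    (the sum over all leaves, organised by leaf length i). *)
Definition valid_algo (Mx My : nat) (PX PY : list nat -> R) (n : nat)
    (phi : algo) : Prop :=
  (forall s y, phi s = Some y -> In y (words My n)) /\
  (forall y, In y (words My n) ->
     infinite_sum
       (fun i => lsum (fun s => if andb (leafb phi s) (outputs phi s y)
                                then PX s else 0) (words Mx i))
       (PY y)).

Definition nfloor (x : R) : nat := Z.to_nat (Int_part x).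

(** Pr(T > x), where T is the stopping time of phi (T = length of the
    first leaf reached, infinity if none): T > x iff T > floor x iff no
    prefix of X^{floor x} (including itself) is a leaf, i.e. phi gives ⊥
    on every such prefix. *)
Definition PrT_gt (Mx : nat) (PX : list nat -> R) (phi : algo) (x : R) : R :=
  lsum (fun s => if forallb (fun j => is_noneb (phi (firstn j s)))
                          (seq 0 (S (length s)))
                 then PX s else 0) (words Mx (nfloor x)).

Definition achievable (Mx : nat) (PX : list nat -> R) (phi : nat -> algo)
    (Rt : R) : Prop :=
  0 <= Rt /\ Un_cv (fun n => PrT_gt Mx PX (phi n) (INR n * Rt)) 0.

(** rates achievable by some sequence of valid algorithms; R* is their inf *)
Definition opt_rates (Mx My : nat) (PX PY : list nat -> R) (Rt : R) : Prop :=
  exists phi : nat -> algo,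
    (forall n, valid_algo Mx My PX PY n (phi n)) /\ achievable Mx PX phi Rt.

(** Interval algorithm. ivl P s = (lower, upper) end of I_s, with
    conditional probabilities P(k|pre) = P(pre ++ [k]) / P(pre). *)
Fixpoint ivl_aux (P : list nat -> R) (pre s : list nat) (lo hi : R) : R * R :=
  match s with
  | [] => (lo, hi)
  | x :: t =>
      let w := hi - lo in
      let c := fun k => P (pre ++ [k]) / P pre in
      ivl_aux P (pre ++ [x]) t (lo + w * lsum c (seq 0 x))
                               (lo + w * lsum c (seq 0 (S x)))
  end.
Definition ivl (P : list nat -> R) (s : list nat) : R * R := ivl_aux P [] s 0 1.

Definition subintb (a b c d : R) : bool :=
  if excluded_middle_informative (forall t, a <= t < b -> c <= t < d)
  then true else false.

Definition interval_alg (My n : nat) (PX PY : list nat -> R) : algo :=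
  fun s => let '(a, b) := ivl PX s in
           find (fun y => let '(c, d) := ivl PY y in subintb a b c d)
                (words My n).

(** rates achievable by the interval algorithm; R*_int is their inf *)
Definition int_rates (Mx My : nat) (PX PY : list nat -> R) (Rt : R) : Prop :=
  achievable Mx PX (fun n => interval_alg My n PX PY) Rt.

(* Main.v *)
Require Import Defs.
From Stdlib Require Import Reals Lra Lia List Arith Bool ClassicalEpsilon Classical ZArith.
Import ListNotations.
Open Scope R_scope.

Section LS.
Context {A : Type}.

Lemma lsum_nil (f : A -> R) : lsum f [] = 0.
Proof. reflexivity. Qed.

Lemma lsum_cons (f : A -> R) a l : lsum f (a :: l) = f a + lsum f l.
Proof. reflexivity. Qed.

Lemma lsum_app (f : A -> R) l1 l2 : lsum f (l1 ++ l2) = lsum f l1 + lsum f l2.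
Proof. induction l1; simpl; [lra|]. rewrite IHl1; lra. Qed.

Lemma lsum_ext_in (f g : A -> R) l : (forall x, In x l -> f x = g x) -> lsum f l = lsum g l.
Proof. induction l; simpl; intros H; [reflexivity|]. rewrite H, IHl; auto. Qed.

Lemma lsum_le_in (f g : A -> R) l : (forall x, In x l -> f x <= g x) -> lsum f l <= lsum g l.
Proof. induction l; simpl; intros H; [lra|]. pose proof (H a (or_introl eq_refl)). pose proof (IHl (fun x h => H x (or_intror h))). lra. Qed.

Lemma lsum_nonneg (f : A -> R) l : (forall x, In x l -> 0 <= f x) -> 0 <= lsum f l.
Proof. intros H. replace 0 with (lsum (fun _ => 0) l). apply lsum_le_in; auto.
 induction l; simpl; auto. rewrite IHl; [lra|]. intros; apply H; simpl; auto. Qed.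

Lemma lsum_zero l : lsum (fun _ : A => 0) l = 0.
Proof. induction l; simpl; auto. rewrite IHl; lra. Qed.

Lemma lsum_plus (f g : A -> R) l : lsum (fun x => f x + g x) l = lsum f l + lsum g l.
Proof. induction l; simpl; [lra|]. rewrite IHl; lra. Qed.

Lemma lsum_scal (k : R) (f : A -> R) l : lsum (fun x => k * f x) l = k * lsum f l.
Proof. induction l; simpl; [lra|]. rewrite IHl; lra. Qed.

Lemma lsum_scalr (k : R) (f : A -> R) l : lsum (fun x => f x * k) l = lsum f l * k.
Proof. induction l; simpl; [lra|]. rewrite IHl; lra. Qed.

Lemma lsum_single (f : A -> R) l a : In a l -> (forall x, In x l -> 0 <= f x) -> f a <= lsum f l.
Proof. induction l; simpl; intros Hi H; [contradiction|]. destruct Hi as [<-|Hi].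
 - pose proof (lsum_nonneg f l (fun x h => H x (or_intror h))). lra.
 - pose proof (H a0 (or_introl eq_refl)). pose proof (IHl Hi (fun x h => H x (or_intror h))). lra. Qed.

Lemma lsum_map {B} (f : B -> R) (g : A -> B) l : lsum f (map g l) = lsum (fun x => f (g x)) l.
Proof. induction l; simpl; auto. rewrite IHl; auto. Qed.


End LS.

Lemma lsum_flat_map {A B} (f : B -> R) (g : A -> list B) l :
  lsum f (flat_map g l) = lsum (fun x => lsum f (g x)) l.
Proof. induction l; [reflexivity|]. cbn [flat_map]. rewrite lsum_app, IHl. reflexivity. Qed.

Lemma lsum_swap {A B} (f : A -> B -> R) l1 l2 :
  lsum (fun a => lsum (fun b => f a b) l2) l1 = lsum (fun b => lsum (fun a => f a b) l1) l2.
Proof. induction l1; simpl. rewrite lsum_zero; auto.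
 rewrite IHl1, <- lsum_plus. reflexivity. Qed.

Lemma words_S_sum M k (f : list nat -> R) :
  lsum f (words M (S k)) = lsum (fun s => lsum (fun x => f (s ++ [x])) (seq 0 M)) (words M k).
Proof. simpl. rewrite lsum_flat_map. apply lsum_ext_in; intros. apply lsum_map. Qed.

Lemma in_words_S M k t : In t (words M (S k)) -> exists s x, t = s ++ [x] /\ In s (words M k) /\ (x < M)%nat.
Proof. simpl. intros H. apply in_flat_map in H as [s [Hs Ht]]. apply in_map_iff in Ht as [x [<- Hx]].
 apply in_seq in Hx. exists s, x; repeat split; auto; lia. Qed.

Lemma in_words_len M n s : In s (words M n) -> length s = n.
Proof. revert s; induction n; intros s H. simpl in H. destruct H as [<-|[]]; auto.
 apply in_words_S in H as [s' [x [-> [H _]]]]. rewrite length_app, IHn; simpl; auto; lia. Qed.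

Lemma in_words_S' M k s x : In s (words M k) -> (x < M)%nat -> In (s ++ [x]) (words M (S k)).
Proof. intros. simpl. apply in_flat_map. exists s; split; auto. apply in_map_iff. exists x; split; auto. apply in_seq; lia. Qed.

Lemma proc_total M P n : is_process M P -> lsum P (words M n) = 1.
Proof. intros [H0 [Hn Hc]]. induction n. simpl. lra.
 rewrite words_S_sum. rewrite <- IHn. apply lsum_ext_in. intros; apply Hc. Qed.

Lemma proc_child_le M P s x : is_process M P -> (x < M)%nat -> P (s ++ [x]) <= P s.
Proof. intros [H0 [Hn Hc]] Hx. rewrite <- (Hc s).
 apply (lsum_single (fun x => P (s ++ [x]))). apply in_seq; lia. intros; auto. Qed.

Lemma proc_le1 M P n s : is_process M P -> In s (words M n) -> P s <= 1.
Proof. intros Hp Hs. rewrite <- (proc_total M P n Hp). apply lsum_single; auto.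
 intros; apply Hp. Qed.

Lemma lsum_zero_ext {A} (f : A -> R) l : (forall x, In x l -> f x = 0) -> lsum f l = 0.
Proof. intros H. rewrite <- (lsum_zero l). apply lsum_ext_in; auto. Qed.

Fixpoint find_some (l : list (option (list nat))) : option (list nat) :=
  match l with [] => None | Some y :: _ => Some y | None :: t => find_some t end.

Definition fsome (phi : algo) (s : list nat) : option (list nat) :=
  find_some (map (fun j => phi (firstn j s)) (seq 0 (S (length s)))).

Lemma find_some_app l1 l2 : find_some (l1 ++ l2) =
  match find_some l1 with Some y => Some y | None => find_some l2 end.
Proof. induction l1 as [|[a|] l1 IH]; simpl; auto. Qed.

Lemma forallb_find_some (g : nat -> option (list nat)) l :
  forallb (fun j => is_noneb (g j)) l = is_noneb (find_some (map g l)).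
Proof. induction l; simpl; auto. destruct (g a); simpl; auto. Qed.

Lemma find_some_in l y : find_some l = Some y -> In (Some y) l.
Proof. induction l as [|[a|] l IH]; simpl; intros H; try discriminate.
 inversion H; subst; auto. right; auto. Qed.

Lemma firstn_snoc_le (s : list nat) x j : (j <= length s)%nat -> firstn j (s ++ [x]) = firstn j s.
Proof. intros H. rewrite firstn_app. replace (j - length s)%nat with 0%nat by lia. simpl. apply app_nil_r. Qed.

Lemma map_firstn_snoc (phi : algo) s x :
  map (fun j => phi (firstn j (s ++ [x]))) (seq 0 (S (length s))) =
  map (fun j => phi (firstn j s)) (seq 0 (S (length s))).
Proof. apply map_ext_in. intros j Hj. apply in_seq in Hj. rewrite firstn_snoc_le; auto; lia. Qed.

Lemma fsome_nil phi : fsome phi [] = phi [].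
Proof. unfold fsome. simpl. destruct (phi []); auto. Qed.

Lemma fsome_snoc phi s x : fsome phi (s ++ [x]) =
  match fsome phi s with Some y => Some y | None => phi (s ++ [x]) end.
Proof. unfold fsome. rewrite length_app. simpl (length [x]).
 replace (length s + 1)%nat with (S (length s)) by lia.
 rewrite (seq_S (S (length s))), map_app, find_some_app, map_firstn_snoc.
 cbn [map]. rewrite Nat.add_0_l, firstn_all2 by (rewrite length_app; simpl; lia). cbn [find_some].
 destruct (find_some _); auto. destruct (phi (s ++ [x])); auto. Qed.

Lemma leafb_nil phi : leafb phi [] = negb (is_noneb (phi [])).
Proof. unfold leafb. simpl. apply andb_true_r. Qed.

Lemma leafb_snoc phi s x : leafb phi (s ++ [x]) = negb (is_noneb (phi (s ++ [x]))) && is_noneb (fsome phi s).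
Proof. unfold leafb. f_equal. rewrite length_app. simpl (length [x]).
 replace (length s + 1)%nat with (S (length s)) by lia.
 rewrite (forallb_find_some (fun j => phi (firstn j (s ++ [x])))), map_firstn_snoc. reflexivity. Qed.

Lemma fsome_some phi s y : fsome phi s = Some y -> exists t, phi t = Some y.
Proof. unfold fsome. intros H. apply find_some_in in H. apply in_map_iff in H as [j [Hj _]]. eauto. Qed.

Definition eqo (o : option (list nat)) (y : list nat) : bool :=
  match o with Some y' => if list_eq_dec Nat.eq_dec y' y then true else false | None => false end.

Lemma eqo_true o y : eqo o y = true <-> o = Some y.
Proof. destruct o; simpl; [|split; congruence]. destruct (list_eq_dec _ l y); split; congruence. Qed.

Definition Lmass Mx PX phi y i :=
  lsum (fun s => if leafb phi s && outputs phi s y then PX s else 0) (words Mx i).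
Definition Qmass Mx PX phi y m :=
  lsum (fun s => if eqo (fsome phi s) y then PX s else 0) (words Mx m).

Lemma Qmass_sum Mx PX phi y m : is_process Mx PX ->
  Qmass Mx PX phi y m = sum_f_R0 (Lmass Mx PX phi y) m.
Proof. intros Hp. induction m.
 - unfold Qmass, Lmass. simpl. rewrite fsome_nil, leafb_nil. unfold outputs.
   destruct (phi []); simpl; auto.
 - simpl. rewrite <- IHm. unfold Qmass, Lmass. rewrite !words_S_sum, <- lsum_plus.
   apply lsum_ext_in. intros s Hs.
   destruct (fsome phi s) as [y'|] eqn:E.
   + transitivity ((if eqo (Some y') y then PX s else 0) + 0); [|f_equal; symmetry; apply lsum_zero_ext; intros x _; rewrite leafb_snoc, E; simpl; rewrite andb_false_r; reflexivity].
     rewrite Rplus_0_r. destruct (eqo (Some y') y) eqn:Ee.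
     * destruct Hp as [_ [_ Hc]]. rewrite <- (Hc s). apply lsum_ext_in. intros x _. rewrite fsome_snoc, E, Ee. reflexivity.
     * apply lsum_zero_ext. intros x _. rewrite fsome_snoc, E, Ee. reflexivity.
   + simpl. rewrite Rplus_0_l. apply lsum_ext_in. intros x _. rewrite fsome_snoc, E, leafb_snoc, E.
     unfold outputs. destruct (phi (s ++ [x])); simpl; auto. Qed.

Lemma partial_mono (u : nat -> R) : (forall i, 0 <= u i) -> forall a b, (a <= b)%nat -> sum_f_R0 u a <= sum_f_R0 u b.
Proof. intros H a b Hab. induction Hab; [lra|]. simpl. pose proof (H (S m)). lra. Qed.

Lemma infinite_sum_ge u l m : (forall i, 0 <= u i) -> infinite_sum u l -> sum_f_R0 u m <= l.
Proof. intros H Hs. destruct (Rle_or_lt (sum_f_R0 u m) l) as [|Hlt]; auto.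
 destruct (Hs (sum_f_R0 u m - l)) as [N HN]; [lra|].
 specialize (HN (Nat.max N m) ltac:(lia)). unfold R_dist in HN.
 pose proof (partial_mono u H m (Nat.max N m) ltac:(lia)).
 apply Rabs_def2 in HN. lra. Qed.

Lemma Lmass_nonneg Mx PX phi y i : is_process Mx PX -> 0 <= Lmass Mx PX phi y i.
Proof. intros Hp. apply lsum_nonneg. intros s _. destruct (_ && _); [apply Hp|lra]. Qed.

Lemma Qmass_le Mx My PX PY n phi y m : is_process Mx PX -> valid_algo Mx My PX PY n phi ->
  In y (words My n) -> Qmass Mx PX phi y m <= PY y.
Proof. intros Hp [_ Hv] Hy. rewrite Qmass_sum by auto. apply infinite_sum_ge; auto.
 intros; apply Lmass_nonneg; auto. exact (Hv y Hy). Qed.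

Lemma core_single Mx My PX PY n phi m s y : is_process Mx PX -> valid_algo Mx My PX PY n phi ->
  In s (words Mx m) -> fsome phi s = Some y -> PX s <= PY y /\ In y (words My n).
Proof. intros Hp Hv Hs E. assert (Hy : In y (words My n)).
 { destruct (fsome_some _ _ _ E) as [t Ht]. exact (proj1 Hv t y Ht). }
 split; auto. eapply Rle_trans; [|apply (Qmass_le Mx My PX PY n phi y m); auto].
 unfold Qmass. eapply Rle_trans; [|apply (lsum_single (fun s => if eqo (fsome phi s) y then PX s else 0) _ s Hs)].
 rewrite E. simpl. destruct (list_eq_dec _ _ _); [|congruence]. lra.
 intros; destruct (eqo _ _); [apply Hp|lra]. Qed.

Lemma lsum_if {A} (b : bool) (f : A -> R) l : lsum (fun x => if b then f x else 0) l = if b then lsum f l else 0.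
Proof. destruct b; auto. apply lsum_zero. Qed.

Lemma core_A Mx My PX PY n phi m (B : list nat -> bool) : is_process Mx PX -> is_process My PY ->
  valid_algo Mx My PX PY n phi ->
  lsum (fun s => match fsome phi s with Some y => if B y then PX s else 0 | None => 0 end) (words Mx m)
  <= lsum (fun y => if B y then PY y else 0) (words My n).
Proof. intros Hp HpY Hv.
 apply Rle_trans with (lsum (fun s => lsum (fun y => if B y then (if eqo (fsome phi s) y then PX s else 0) else 0) (words My n)) (words Mx m)).
 - apply lsum_le_in. intros s Hs. destruct (fsome phi s) as [y0|] eqn:E.
   + destruct (core_single _ _ _ _ _ _ _ _ _ Hp Hv Hs E) as [_ Hy0].
     eapply Rle_trans; [|apply (lsum_single _ _ y0 Hy0)].
     * simpl. destruct (B y0); [|lra]. destruct (list_eq_dec _ _ _); [|congruence]. lra.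
     * intros; destruct (B x); [destruct (eqo _ _); [apply Hp|]|]; lra.
   + apply lsum_nonneg. intros; destruct (B x); [destruct (eqo _ _); [apply Hp|]|]; lra.
 - rewrite lsum_swap. apply lsum_le_in. intros y Hy. rewrite lsum_if.
   destruct (B y); [|lra]. apply (Qmass_le Mx My PX PY n phi y m); auto. Qed.

Definition Tgt Mx PX phi m := lsum (fun s => if is_noneb (fsome phi s) then PX s else 0) (words Mx m).

Lemma PrT_gt_Tgt Mx PX phi x : PrT_gt Mx PX phi x = Tgt Mx PX phi (nfloor x).
Proof. unfold PrT_gt, Tgt. apply lsum_ext_in. intros s Hs. apply in_words_len in Hs.
 rewrite forallb_find_some. reflexivity. Qed.

Lemma Tgt_S Mx PX phi m : is_process Mx PX -> Tgt Mx PX phi (S m) <= Tgt Mx PX phi m.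
Proof. intros Hp. unfold Tgt. rewrite words_S_sum. apply lsum_le_in. intros s Hs.
 destruct (fsome phi s) eqn:E; simpl.
 - right. apply lsum_zero_ext. intros x _. rewrite fsome_snoc, E. reflexivity.
 - destruct Hp as [_ [Hn Hc]]. rewrite <- (Hc s). apply lsum_le_in. intros x _.
   destruct (is_noneb _); [lra|apply Hn]. Qed.

Lemma Tgt_mono Mx PX phi m m' : is_process Mx PX -> (m <= m')%nat -> Tgt Mx PX phi m' <= Tgt Mx PX phi m.
Proof. intros Hp H. induction H; [lra|]. pose proof (Tgt_S Mx PX phi m0 Hp). lra. Qed.

Lemma Tgt_nonneg Mx PX phi m : is_process Mx PX -> 0 <= Tgt Mx PX phi m.
Proof. intros Hp. apply lsum_nonneg. intros; destruct (is_noneb _); [apply Hp|lra]. Qed.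

Definition ov (a b c d : R) : R := Rmax 0 (Rmin b d - Rmax a c).

Ltac ovt := unfold ov, Rmax, Rmin in *; repeat (destruct Rle_dec); lra.

Lemma ov_nonneg a b c d : 0 <= ov a b c d.
Proof. ovt. Qed.
Lemma ov_sym a b c d : ov a b c d = ov c d a b.
Proof. ovt. Qed.
Lemma ov_add a b e c d : a <= b -> b <= e -> ov a b c d + ov b e c d = ov a e c d.
Proof. intros; ovt. Qed.
Lemma ov_le1 a b c d : a <= b -> ov a b c d <= b - a.
Proof. intros; ovt. Qed.
Lemma ov_le2 a b c d : c <= d -> ov a b c d <= d - c.
Proof. intros; ovt. Qed.
Lemma ov_full a b : 0 <= a -> a <= b -> b <= 1 -> ov a b 0 1 = b - a.
Proof. intros; ovt. Qed.
Lemma ov_straddle a b c d del : a <= b -> c <= d -> b - a < del ->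
  ~ (forall t, a <= t < b -> c <= t < d) ->
  ov a b c d <= ov a b (c - del) (c + del) + ov a b (d - del) (d + del).
Proof. intros H1 H2 H3 H4. assert (a < c \/ d < b) as [H|H].
 { destruct (Rlt_or_le a c); auto. destruct (Rlt_or_le d b); auto. exfalso; apply H4; intros; lra. }
 - assert (Hx : ov a b c d <= ov a b (c - del) (c + del)) by ovt.
   pose proof (ov_nonneg a b (d - del) (d + del)). lra.
 - assert (Hx : ov a b c d <= ov a b (d - del) (d + del)) by ovt.
   pose proof (ov_nonneg a b (c - del) (c + del)). lra. Qed.

Lemma mono_le (f : nat -> R) : (forall x, f x <= f (S x)) -> forall a b, (a <= b)%nat -> f a <= f b.
Proof. intros H a b Hab. induction Hab; [lra|]. specialize (H m). lra. Qed.

Lemma ov_telescope (f : nat -> R) c d : (forall x, f x <= f (S x)) -> forall M,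
  lsum (fun x => ov (f x) (f (S x)) c d) (seq 0 M) = ov (f 0%nat) (f M) c d.
Proof. intros H M. induction M. simpl. unfold ov, Rmax, Rmin; repeat destruct Rle_dec; lra.
 rewrite seq_S, lsum_app, IHM. simpl. rewrite Rplus_0_r. apply ov_add; auto.
 apply mono_le; auto; lia. Qed.

Lemma ivl_aux_app P pre s t lo hi : ivl_aux P pre (s ++ t) lo hi =
  let '(lo', hi') := ivl_aux P pre s lo hi in ivl_aux P (pre ++ s) t lo' hi'.
Proof. revert pre lo hi. induction s as [|x s IH]; intros pre lo hi.
 - simpl. rewrite app_nil_r. reflexivity.
 - simpl. rewrite IH. destruct (ivl_aux P (pre ++ [x]) s _ _). rewrite <- app_assoc. reflexivity. Qed.

Definition cs (P : list nat -> R) s k := lsum (fun j => P (s ++ [j]) / P s) (seq 0 k).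

Lemma ivl_snoc P s x : ivl P (s ++ [x]) =
  (fst (ivl P s) + (snd (ivl P s) - fst (ivl P s)) * cs P s x,
   fst (ivl P s) + (snd (ivl P s) - fst (ivl P s)) * cs P s (S x)).
Proof. unfold ivl. rewrite ivl_aux_app. destruct (ivl_aux P [] s 0 1) as [a b]. simpl. reflexivity. Qed.

Lemma cs_S P s k : cs P s (S k) = cs P s k + P (s ++ [k]) / P s.
Proof. unfold cs. rewrite seq_S, lsum_app. simpl. lra. Qed.

Lemma cs_0 P s : cs P s 0 = 0.
Proof. reflexivity. Qed.

Lemma div_nonneg a b : 0 <= a -> 0 <= b -> 0 <= a / b.
Proof. intros. destruct H0 as [H0|<-]. unfold Rdiv. apply Rmult_le_pos; auto. left; apply Rinv_0_lt_compat; auto.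
 unfold Rdiv. rewrite Rinv_0. lra. Qed.

Lemma cs_mono M P s : is_process M P -> forall x, cs P s x <= cs P s (S x).
Proof. intros Hp x. rewrite cs_S. pose proof (div_nonneg (P (s ++ [x])) (P s) (proj1 (proj2 Hp) _) (proj1 (proj2 Hp) _)). lra. Qed.

Lemma cs_M M P s : is_process M P -> 0 < P s -> cs P s M = 1.
Proof. intros Hp Hs. unfold cs, Rdiv. rewrite lsum_scalr. rewrite (proj2 (proj2 Hp)). field. lra. Qed.

Lemma ivl_props M P m s : is_process M P -> In s (words M m) ->
  0 <= fst (ivl P s) /\ fst (ivl P s) <= snd (ivl P s) /\ snd (ivl P s) <= 1 /\
  snd (ivl P s) - fst (ivl P s) = P s.
Proof. intros Hp. revert s. induction m; intros s Hs.
 - simpl in Hs. destruct Hs as [<-|[]]. unfold ivl. simpl. rewrite (proj1 Hp). lra.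
 - apply in_words_S in Hs as [s' [x [-> [Hs Hx]]]]. specialize (IHm s' Hs).
   rewrite ivl_snoc. simpl. set (a := fst (ivl P s')) in *. set (b := snd (ivl P s')) in *.
   destruct IHm as [H1 [H2 [H3 H4]]].
   pose proof (proc_child_le M P s' x Hp Hx). pose proof (proj1 (proj2 Hp) (s' ++ [x])).
   pose proof (proj1 (proj2 Hp) s').
   destruct (Rle_lt_or_eq_dec 0 (P s') ltac:(auto)) as [Hpos|Hz].
   + pose proof (mono_le _ (cs_mono M P s' Hp) 0 x ltac:(lia)) as G5. cbv beta in G5. rewrite cs_0 in G5.
     pose proof (mono_le _ (cs_mono M P s' Hp) (S x) M ltac:(lia)) as G6. cbv beta in G6. rewrite (cs_M M P s' Hp Hpos) in G6.
     pose proof (cs_mono M P s' Hp x) as G7.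
     rewrite cs_S. rewrite H4. repeat split.
     * apply Rplus_le_le_0_compat; auto. apply Rmult_le_pos; lra.
     * apply Rplus_le_compat_l. apply Rmult_le_compat_l; [lra|]. rewrite <- cs_S. auto.
     * rewrite cs_S in G6. assert (P s' * (cs P s' x + P (s' ++ [x]) / P s') <= P s' * 1) by (apply Rmult_le_compat_l; lra). lra.
     * field. lra.
   + rewrite <- Hz in H4. assert (G8 : P (s' ++ [x]) = 0) by lra. rewrite H4, G8. lra. Qed.

Lemma ivl_tree M P m c d : is_process M P ->
  lsum (fun s => ov (fst (ivl P s)) (snd (ivl P s)) c d) (words M m) = ov 0 1 c d.
Proof. intros Hp. induction m.
 - simpl. unfold ivl; simpl. lra.
 - rewrite words_S_sum, <- IHm. apply lsum_ext_in. intros s Hs.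
   destruct (ivl_props M P m s Hp Hs) as [H1 [H2 [H3 H4]]].
   set (a := fst (ivl P s)) in *. set (b := snd (ivl P s)) in *.
   set (f := fun k => a + (b - a) * cs P s k).
   transitivity (lsum (fun x => ov (f x) (f (S x)) c d) (seq 0 M)).
   + apply lsum_ext_in. intros x _. rewrite ivl_snoc. reflexivity.
   + rewrite ov_telescope.
     * unfold f. rewrite cs_0, Rmult_0_r, Rplus_0_r. f_equal.
       destruct (Rle_lt_or_eq_dec 0 (P s) (proj1 (proj2 Hp) s)) as [Hpos|Hz].
       -- rewrite (cs_M M P s Hp Hpos). lra.
       -- rewrite H4, <- Hz. lra.
     * intros x. unfold f. pose proof (cs_mono M P s Hp x). apply Rplus_le_compat_l, Rmult_le_compat_l; lra. Qed.

Definition geI (P : list nat -> R) n lam s : R :=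
  if Rlt_dec 0 (P s) then if Rle_dec lam (/ INR n * log2 (/ P s)) then 1 else 0 else 0.
Definition leI (P : list nat -> R) n lam s : R :=
  if Rlt_dec 0 (P s) then if Rle_dec (/ INR n * log2 (/ P s)) lam then 1 else 0 else 0.

Lemma PrGe_I M P n lam : PrGe M P n lam = lsum (fun s => geI P n lam s * P s) (words M n).
Proof. apply lsum_ext_in; intros s _. unfold geI. repeat destruct (Rlt_dec _ _); repeat destruct (Rle_dec _ _); lra. Qed.
Lemma PrLe_I M P n lam : PrLe M P n lam = lsum (fun s => leI P n lam s * P s) (words M n).
Proof. apply lsum_ext_in; intros s _. unfold leI. repeat destruct (Rlt_dec _ _); repeat destruct (Rle_dec _ _); lra. Qed.

Lemma geI_01 P n lam s : 0 <= geI P n lam s <= 1.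
Proof. unfold geI. repeat destruct (Rlt_dec _ _); repeat destruct (Rle_dec _ _); lra. Qed.
Lemma leI_01 P n lam s : 0 <= leI P n lam s <= 1.
Proof. unfold leI. repeat destruct (Rlt_dec _ _); repeat destruct (Rle_dec _ _); lra. Qed.

Lemma ln2_pos : 0 < ln 2.
Proof. pose proof ln_lt_2. lra. Qed.

Lemma exp_lt_iff x y : x < y <-> exp x < exp y.
Proof. split; [apply exp_increasing|apply exp_lt_inv]. Qed.

Lemma log_eq n p : (0 < n)%nat -> 0 < p -> / INR n * log2 (/ p) = - ln p / (INR n * ln 2).
Proof. intros Hn Hp. pose proof (lt_0_INR n Hn). pose proof ln2_pos.
 unfold log2. rewrite ln_Rinv by auto. field. split; lra. Qed.

Lemma log_conv n p lam : (0 < n)%nat -> 0 < p ->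
  (lam < / INR n * log2 (/ p) <-> p < exp (- (INR n * lam * ln 2))).
Proof. intros Hn Hp. pose proof (lt_0_INR n Hn) as Q1. pose proof ln2_pos as Q2.
 rewrite log_eq by auto. rewrite <- (exp_ln p) at 2 by auto. rewrite <- exp_lt_iff.
 assert (Q3 : 0 < INR n * ln 2) by (apply Rmult_lt_0_compat; auto).
 split; intros H1.
 - apply (Rmult_lt_compat_r (INR n * ln 2)) in H1; auto. unfold Rdiv in H1. rewrite Rmult_assoc, Rinv_l in H1 by lra. lra.
 - apply (Rmult_lt_reg_r (INR n * ln 2)); auto. unfold Rdiv. rewrite Rmult_assoc, Rinv_l by lra. lra. Qed.

Lemma log_conv2 n p lam : (0 < n)%nat -> 0 < p ->
  (/ INR n * log2 (/ p) < lam <-> exp (- (INR n * lam * ln 2)) < p).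
Proof. intros Hn Hp. pose proof (lt_0_INR n Hn) as Q1. pose proof ln2_pos as Q2.
 rewrite log_eq by auto. rewrite <- (exp_ln p) at 2 by auto. rewrite <- exp_lt_iff.
 assert (Q3 : 0 < INR n * ln 2) by (apply Rmult_lt_0_compat; auto).
 split; intros H1.
 - apply (Rmult_lt_compat_r (INR n * ln 2)) in H1; auto. unfold Rdiv in H1. rewrite Rmult_assoc, Rinv_l in H1 by lra. lra.
 - apply (Rmult_lt_reg_r (INR n * ln 2)); auto. unfold Rdiv. rewrite Rmult_assoc, Rinv_l by lra. lra. Qed.

Lemma fsome_none_phi phi s : fsome phi s = None -> phi s = None.
Proof. unfold fsome. intros H.
 assert (forall l j, find_some (map (fun j => phi (firstn j s)) l) = None -> In j l -> phi (firstn j s) = None).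
 { induction l; simpl; intros j H1 H2; [contradiction|]. destruct (phi (firstn a s)) eqn:E; [discriminate|].
   destruct H2 as [<-|H2]; auto. }
 rewrite <- (firstn_all s). apply (H0 _ _ H). apply in_seq; lia. Qed.

Lemma intalg_none My n PX PY s : interval_alg My n PX PY s = None ->
  forall y, In y (words My n) ->
  ~ (forall t, fst (ivl PX s) <= t < snd (ivl PX s) -> fst (ivl PY y) <= t < snd (ivl PY y)).
Proof. unfold interval_alg. destruct (ivl PX s) as [a b]. intros H y Hy.
 pose proof (find_none _ _ H y Hy) as H1. cbv beta in H1. simpl. destruct (ivl PY y) as [c d] eqn:Ec. simpl.
 unfold subintb in H1. destruct (excluded_middle_informative (forall t : R, a <= t < b -> c <= t < d)); [discriminate|auto]. Qed.

Section IB.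
Variables (Mx My : nat) (PX PY : list nat -> R) (hX : is_process Mx PX) (hY : is_process My PY).
Variables (n m : nat) (lX lY : R) (hn : (0 < n)%nat) (hm : (0 < m)%nat).
Let dl := exp (- (INR m * lX * ln 2)).
Let E := exp (INR n * lY * ln 2).
Let a s := fst (ivl PX s). Let b s := snd (ivl PX s).
Let c y := fst (ivl PY y). Let d y := snd (ivl PY y).

Definition Tm s y := geI PY n lY y * ov (a s) (b s) (c y) (d y) + leI PX m lX s * ov (a s) (b s) (c y) (d y)
  + PY y * E * (ov (a s) (b s) (c y - dl) (c y + dl) + ov (a s) (b s) (d y - dl) (d y + dl)).

Lemma Tm_nonneg s y : 0 <= Tm s y.
Proof. unfold Tm. pose proof (geI_01 PY n lY y). pose proof (leI_01 PX m lX s).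
 pose proof (ov_nonneg (a s) (b s) (c y) (d y)). pose proof (ov_nonneg (a s) (b s) (c y - dl) (c y + dl)).
 pose proof (ov_nonneg (a s) (b s) (d y - dl) (d y + dl)). pose proof (proj1 (proj2 hY) y).
 assert (0 < E) by apply exp_pos.
 assert (0 <= PY y * E * (ov (a s) (b s) (c y - dl) (c y + dl) + ov (a s) (b s) (d y - dl) (d y + dl))).
 { apply Rmult_le_pos; [apply Rmult_le_pos|]; lra. }
 pose proof (Rmult_le_pos _ _ (proj1 (geI_01 PY n lY y)) H1).
 pose proof (Rmult_le_pos _ _ (proj1 (leI_01 PX m lX s)) H1). lra. Qed.

Lemma Tm_bound s y : In s (words Mx m) -> In y (words My n) ->
  ~ (forall t, a s <= t < b s -> c y <= t < d y) -> ov (a s) (b s) (c y) (d y) <= Tm s y.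
Proof. intros Hs Hy Hn.
 destruct (ivl_props Mx PX m s hX Hs) as [A1 [A2 [A3 A4]]].
 destruct (ivl_props My PY n y hY Hy) as [B1 [B2 [B3 B4]]].
 fold (a s) (b s) in A1, A2, A3, A4. fold (c y) (d y) in B1, B2, B3, B4.
 pose proof (ov_nonneg (a s) (b s) (c y) (d y)) as O0.
 pose proof (ov_nonneg (a s) (b s) (c y - dl) (c y + dl)) as O1.
 pose proof (ov_nonneg (a s) (b s) (d y - dl) (d y + dl)) as O2.
 pose proof (proj1 (proj2 hY) y) as HPy. pose proof (proj1 (proj2 hX) s) as HPx.
 assert (HE : 0 < E) by apply exp_pos.
 assert (T3 : 0 <= PY y * E * (ov (a s) (b s) (c y - dl) (c y + dl) + ov (a s) (b s) (d y - dl) (d y + dl))).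
 { apply Rmult_le_pos; [apply Rmult_le_pos|]; lra. }
 unfold Tm. unfold geI, leI.
 destruct (Rlt_dec 0 (PY y)) as [Py|Py]; [|assert (PY y = 0) by lra; pose proof (ov_le2 (a s) (b s) (c y) (d y) B2);
   repeat destruct (Rlt_dec _ _); repeat destruct (Rle_dec _ _); nra].
 destruct (Rlt_dec 0 (PX s)) as [Px|Px]; [|assert (PX s = 0) by lra; pose proof (ov_le1 (a s) (b s) (c y) (d y) A2);
   repeat destruct (Rle_dec _ _); nra].
 destruct (Rle_dec lY _) as [G1|G1]; [destruct (Rle_dec _ lX); nra|].
 destruct (Rle_dec _ lX) as [G2|G2]; [nra|].
 apply Rnot_le_lt in G1. apply Rnot_le_lt in G2.
 apply (log_conv2 n _ _ hn Py) in G1. apply (log_conv m _ _ hm Px) in G2.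
 fold dl in G2.
 assert (HE1 : 1 < PY y * E).
 { unfold E. replace 1 with (exp (- (INR n * lY * ln 2)) * exp (INR n * lY * ln 2)).
   apply Rmult_lt_compat_r; auto. rewrite <- exp_plus. replace (_ + _) with 0 by ring. apply exp_0. }
 pose proof (ov_straddle (a s) (b s) (c y) (d y) dl A2 B2 ltac:(lra) Hn).
 nra. Qed.

Lemma int_ineq : Tgt Mx PX (interval_alg My n PX PY) m <= PrGe My PY n lY + PrLe Mx PX m lX + 4 * dl * E.
Proof.
 apply Rle_trans with (lsum (fun s => lsum (fun y => Tm s y) (words My n)) (words Mx m)).
 { unfold Tgt. apply lsum_le_in. intros s Hs.
   destruct (fsome (interval_alg My n PX PY) s) eqn:Ef; simpl.
   - apply lsum_nonneg. intros; apply Tm_nonneg.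
   - apply fsome_none_phi in Ef.
     destruct (ivl_props Mx PX m s hX Hs) as [A1 [A2 [A3 A4]]].
     rewrite <- A4. rewrite <- ov_full by auto. rewrite ov_sym. rewrite <- (ivl_tree My PY n _ _ hY).
     apply lsum_le_in. intros y Hy. rewrite ov_sym. apply Tm_bound; auto.
     apply (intalg_none My n PX PY s Ef y Hy). }
 unfold Tm.
 transitivity (lsum (fun s => lsum (fun y => geI PY n lY y * ov (a s) (b s) (c y) (d y)) (words My n)) (words Mx m)
   + lsum (fun s => lsum (fun y => leI PX m lX s * ov (a s) (b s) (c y) (d y)) (words My n)) (words Mx m)
   + lsum (fun s => lsum (fun y => PY y * E * (ov (a s) (b s) (c y - dl) (c y + dl) + ov (a s) (b s) (d y - dl) (d y + dl))) (words My n)) (words Mx m)).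
 { right. rewrite <- !lsum_plus. apply lsum_ext_in; intros s _. rewrite <- !lsum_plus. reflexivity. }
 assert (Q1 : lsum (fun s => lsum (fun y => geI PY n lY y * ov (a s) (b s) (c y) (d y)) (words My n)) (words Mx m) = PrGe My PY n lY).
 { rewrite PrGe_I, lsum_swap. apply lsum_ext_in. intros y Hy. rewrite lsum_scal. f_equal.
   unfold a, b. rewrite ivl_tree by auto. destruct (ivl_props My PY n y hY Hy) as [B1 [B2 [B3 B4]]].
   rewrite ov_sym, ov_full by auto. auto. }
 assert (Q2 : lsum (fun s => lsum (fun y => leI PX m lX s * ov (a s) (b s) (c y) (d y)) (words My n)) (words Mx m) = PrLe Mx PX m lX).
 { rewrite PrLe_I. apply lsum_ext_in. intros s Hs. rewrite lsum_scal. f_equal.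
   rewrite (lsum_ext_in _ (fun y => ov (fst (ivl PY y)) (snd (ivl PY y)) (a s) (b s))) by (intros; apply ov_sym).
   rewrite ivl_tree by auto. destruct (ivl_props Mx PX m s hX Hs) as [B1 [B2 [B3 B4]]].
   rewrite ov_sym, ov_full by auto. auto. }
 assert (Q3 : lsum (fun s => lsum (fun y => PY y * E * (ov (a s) (b s) (c y - dl) (c y + dl) + ov (a s) (b s) (d y - dl) (d y + dl))) (words My n)) (words Mx m) <= 4 * dl * E).
 { rewrite lsum_swap. assert (Hd : 0 < dl) by apply exp_pos. assert (HE : 0 < E) by apply exp_pos.
   apply Rle_trans with (lsum (fun y => PY y * (4 * dl * E)) (words My n)).
   - apply lsum_le_in. intros y Hy. rewrite lsum_scal, lsum_plus. unfold a, b. rewrite !ivl_tree by auto.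
     pose proof (ov_le2 0 1 (c y - dl) (c y + dl) ltac:(lra)). pose proof (ov_le2 0 1 (d y - dl) (d y + dl) ltac:(lra)).
     pose proof (proj1 (proj2 hY) y). 
     assert (PY y * E * (ov 0 1 (c y - dl) (c y + dl) + ov 0 1 (d y - dl) (d y + dl)) <= PY y * E * (4 * dl)).
     { apply Rmult_le_compat_l; [apply Rmult_le_pos; lra|lra]. }
     lra.
   - rewrite lsum_scalr, (proc_total My PY n hY). lra. }
 lra. Qed.
End IB.

Definition geB (P : list nat -> R) n lam s : bool :=
  if Rlt_dec 0 (P s) then if Rle_dec lam (/ INR n * log2 (/ P s)) then true else false else false.
Definition leB (P : list nat -> R) n lam s : bool :=
  if Rlt_dec 0 (P s) then if Rle_dec (/ INR n * log2 (/ P s)) lam then true else false else false.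

Lemma PrGe_B M P n lam : PrGe M P n lam = lsum (fun s => if geB P n lam s then P s else 0) (words M n).
Proof. apply lsum_ext_in; intros s _. unfold geB. repeat destruct (Rlt_dec _ _); repeat destruct (Rle_dec _ _); lra. Qed.
Lemma PrLe_B M P n lam : PrLe M P n lam = lsum (fun s => if leB P n lam s then P s else 0) (words M n).
Proof. apply lsum_ext_in; intros s _. unfold leB. repeat destruct (Rlt_dec _ _); repeat destruct (Rle_dec _ _); lra. Qed.

Lemma geB_small P n lam s p : (0 < n)%nat -> geB P n lam s = true -> 0 < p -> p <= P s ->
  p <= exp (- (INR n * lam * ln 2)).
Proof. unfold geB. intros Hn H Hp Hps. destruct (Rlt_dec 0 (P s)) as [Ps|]; [|discriminate].
 destruct (Rle_dec lam _) as [G|]; [|discriminate].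
 destruct (Rle_or_lt p (exp (- (INR n * lam * ln 2)))) as [|Hl]; auto.
 assert (exp (- (INR n * lam * ln 2)) < P s) by lra.
 apply (log_conv2 n _ _ Hn Ps) in H0. lra. Qed.

Lemma leI_big P n lam s : (0 < n)%nat -> leB P n lam s = true ->
  0 < P s /\ exp (- (INR n * lam * ln 2)) <= P s.
Proof. unfold leB. intros Hn H. destruct (Rlt_dec 0 (P s)) as [Ps|]; [|discriminate].
 destruct (Rle_dec _ lam) as [G|]; [|discriminate]. split; auto.
 destruct (Rle_or_lt (exp (- (INR n * lam * ln 2))) (P s)) as [|Hl]; auto.
 apply (log_conv n _ _ Hn Ps) in Hl. lra. Qed.

Lemma lsum_bool3 Mx PX phi m (B0 : list nat -> bool) : is_process Mx PX ->
  lsum (fun s => if is_noneb (fsome phi s) then PX s else 0) (words Mx m)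
  + lsum (fun s => match fsome phi s with Some y => if B0 y then PX s else 0 | None => 0 end) (words Mx m)
  + lsum (fun s => match fsome phi s with Some y => if negb (B0 y) then PX s else 0 | None => 0 end) (words Mx m) = 1.
Proof. intros Hp. rewrite <- (proc_total Mx PX m Hp), <- !lsum_plus. apply lsum_ext_in. intros s _.
 destruct (fsome phi s); simpl; [destruct (B0 l); simpl|]; lra. Qed.

Lemma lb1 Mx My PX PY n phi m R lX lY : is_process Mx PX -> is_process My PY ->
  valid_algo Mx My PX PY n phi -> (0 < n)%nat -> INR m <= INR n * R -> 0 < lX -> R * lX < lY -> 0 <= R ->
  PrGe My PY n lY <= Tgt Mx PX phi m + (if Nat.eqb m 0 then 0 else PrGe Mx PX m lX).
Proof. intros hX hY Hv Hn Hm HlX HR HR0.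
 pose proof (lsum_bool3 Mx PX phi m (geB PY n lY) hX) as T3.
 pose proof (core_A Mx My PX PY n phi m (fun y => negb (geB PY n lY y)) hX hY Hv) as CA.
 assert (TY : lsum (fun y => if geB PY n lY y then PY y else 0) (words My n) + lsum (fun y => if negb (geB PY n lY y) then PY y else 0) (words My n) = 1).
 { rewrite <- (proc_total My PY n hY), <- lsum_plus. apply lsum_ext_in. intros y _. destruct (geB _ _ _ _); simpl; lra. }
 assert (K : lsum (fun s => match fsome phi s with Some y => if geB PY n lY y then PX s else 0 | None => 0 end) (words Mx m)
   <= (if Nat.eqb m 0 then 0 else PrGe Mx PX m lX)).
 { pose proof (lt_0_INR n Hn) as Hn'. pose proof ln2_pos as L2.
   assert (Hexp : exp (- (INR m * lX * ln 2)) >= exp (- (INR n * lY * ln 2))).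
   { assert (INR m * lX <= INR n * lY). { apply Rle_trans with (INR n * R * lX). apply Rmult_le_compat_r; lra.
       rewrite Rmult_assoc. apply Rmult_le_compat_l; lra. }
     destruct (Req_dec (INR m * lX) (INR n * lY)) as [Heq|Hne]. rewrite Heq; lra.
     left. apply exp_increasing. assert (INR m * lX * ln 2 < INR n * lY * ln 2) by (apply Rmult_lt_compat_r; lra). lra. }
   destruct (Nat.eqb_spec m 0) as [->|Hm0].
   - simpl. rewrite Rplus_0_r. destruct (fsome phi []) as [y|] eqn:E; [|lra].
     destruct (geB PY n lY y) eqn:G; [|lra].
     destruct (core_single Mx My PX PY n phi 0 [] y hX Hv (or_introl eq_refl) E) as [H1 _].
     rewrite (proj1 hX) in H1 |- *. pose proof (geB_small PY n lY y 1 Hn G Rlt_0_1 H1).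
     assert (exp (- (INR n * lY * ln 2)) < 1). { rewrite <- exp_0. apply exp_increasing.
       assert (0 < INR n * lY * ln 2). { apply Rmult_lt_0_compat; [apply Rmult_lt_0_compat|]; nra. } lra. }
     lra.
   - rewrite PrGe_B. apply lsum_le_in. intros s Hs. destruct (fsome phi s) as [y|] eqn:E.
     + destruct (geB PY n lY y) eqn:G; [|destruct (geB PX m lX s); [apply hX|lra]].
       destruct (core_single Mx My PX PY n phi m s y hX Hv Hs E) as [H1 _].
       unfold geB at 1. destruct (Rlt_dec 0 (PX s)) as [Px|Px]; [|lra].
       destruct (Rle_dec lX _) as [|G2]; [lra|]. exfalso. apply Rnot_le_lt in G2.
       apply (log_conv2 m _ _ ltac:(lia) Px) in G2.
       pose proof (geB_small PY n lY y (PX s) Hn G Px H1). lra.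
     + destruct (geB PX m lX s); [apply hX|lra]. }
 unfold Tgt. rewrite PrGe_B. cbv beta in *. lra. Qed.

Lemma lb2 Mx My PX PY n phi m lX lY : is_process Mx PX -> is_process My PY ->
  valid_algo Mx My PX PY n phi -> (0 < n)%nat -> (0 < m)%nat -> INR m * lX < INR n * lY ->
  PrLe Mx PX m lX <= Tgt Mx PX phi m + PrLe My PY n lY.
Proof. intros hX hY Hv Hn Hm Hl.
 pose proof (core_A Mx My PX PY n phi m (leB PY n lY) hX hY Hv) as CA. rewrite <- PrLe_B in CA.
 unfold Tgt. eapply Rle_trans; [|apply Rplus_le_compat_l; exact CA].
 rewrite PrLe_B, <- lsum_plus. apply lsum_le_in. intros s Hs.
 destruct (fsome phi s) as [y|] eqn:E; simpl.
 - destruct (leB PX m lX s) eqn:G; [|pose proof (proj1 (proj2 hX) s); destruct (leB PY n lY y); lra].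
   destruct (core_single Mx My PX PY n phi m s y hX Hv Hs E) as [H1 _].
   destruct (leI_big PX m lX s Hm G) as [Px H2].
   replace (leB PY n lY y) with true; [lra|]. symmetry.
   unfold leB. destruct (Rlt_dec 0 (PY y)); [|lra]. destruct (Rle_dec _ lY) as [|G2]; auto. exfalso.
   assert (exp (- (INR n * lY * ln 2)) < PY y).
   { eapply Rlt_le_trans; [|apply Rle_trans with (PX s); eauto]. apply exp_increasing.
     pose proof ln2_pos. assert (INR m * lX * ln 2 < INR n * lY * ln 2) by (apply Rmult_lt_compat_r; lra). lra. }
   apply (log_conv2 n _ _ Hn r) in H. lra.
 - destruct (leB PX m lX s); [lra|]. pose proof (proj1 (proj2 hX) s). lra. Qed.

Lemma nfloor_spec x : 0 <= x -> INR (nfloor x) <= x /\ x - 1 < INR (nfloor x).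
Proof. intros Hx. destruct (base_Int_part x) as [H1 H2]. unfold nfloor.
 assert (Hz : (0 <= Int_part x)%Z). { assert (IZR (-1) < IZR (Int_part x)) by (simpl; lra). apply lt_IZR in H. lia. }
 rewrite INR_IZR_INZ, Z2Nat.id by auto. lra. Qed.

Lemma nfloor_le x m : 0 <= x -> x <= INR m -> (nfloor x <= m)%nat.
Proof. intros H1 H2. apply INR_le. pose proof (nfloor_spec x H1). lra. Qed.

Lemma arch r : exists N, forall m, (N <= m)%nat -> r <= INR m.
Proof. exists (S (nfloor (Rmax r 0))). intros m Hm. apply le_INR in Hm. rewrite S_INR in Hm.
 pose proof (nfloor_spec (Rmax r 0) (Rmax_r r 0)). pose proof (Rmax_l r 0). lra. Qed.

Lemma squeeze (u v : nat -> R) : (exists N, forall n, (N <= n)%nat -> 0 <= u n <= v n) -> Un_cv v 0 -> Un_cv u 0.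
Proof. intros [N HN] Hv eps He. destruct (Hv eps He) as [N2 H2]. exists (Nat.max N N2). intros n Hn.
 specialize (HN n ltac:(lia)). specialize (H2 n ltac:(lia)). unfold R_dist in *.
 rewrite Rminus_0_r in *. rewrite Rabs_right in * by lra. lra. Qed.

Lemma subseq (u : nat -> R) (g : nat -> nat) : Un_cv u 0 ->
  (forall K, exists N, forall n, (N <= n)%nat -> (K <= g n)%nat) -> Un_cv (fun n => u (g n)) 0.
Proof. intros Hu Hg eps He. destruct (Hu eps He) as [N1 H1]. destruct (Hg N1) as [N2 H2].
 exists N2. intros n Hn. apply H1. specialize (H2 n Hn). lia. Qed.

Lemma cv_zero : Un_cv (fun _ => 0) 0.
Proof. intros eps He. exists 0%nat. intros. unfold R_dist. rewrite Rminus_0_r, Rabs_R0. auto. Qed.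

Lemma exp_pow a n : exp (a * INR n) = exp a ^ n.
Proof. induction n. simpl. rewrite Rmult_0_r. apply exp_0. rewrite S_INR, Rmult_plus_distr_l, exp_plus, IHn. simpl. rewrite Rmult_1_r. ring. Qed.

Lemma exp_decay a b : a < 0 -> Un_cv (fun n => 4 * exp (a * INR n + b)) 0.
Proof. intros Ha eps He. assert (Hea : Rabs (exp a) < 1).
 { rewrite Rabs_right by (left; apply exp_pos). rewrite <- exp_0. apply exp_increasing; auto. }
 assert (Hb : 0 < eps / (4 * exp b)). { apply Rdiv_lt_0_compat; auto. pose proof (exp_pos b). lra. }
 destruct (pow_lt_1_zero _ Hea _ Hb) as [N HN]. exists N. intros n Hn. specialize (HN n Hn).
 unfold R_dist. rewrite Rminus_0_r, exp_plus, exp_pow. pose proof (exp_pos b) as Eb. pose proof (pow_lt (exp a) n (exp_pos a)) as Ep.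
 rewrite Rabs_right in HN by lra.
 rewrite Rabs_right by (apply Rle_ge; apply Rmult_le_pos; [lra|apply Rmult_le_pos; lra]).
 apply (Rmult_lt_compat_l (4 * exp b)) in HN; [|lra]. unfold Rdiv in HN.
 replace (4 * exp b * (eps * / (4 * exp b))) with eps in HN by (field; lra). lra. Qed.

Lemma PrGe_nonneg M P n lam : is_process M P -> 0 <= PrGe M P n lam.
Proof. intros Hp. rewrite PrGe_B. apply lsum_nonneg. intros; destruct (geB _ _ _ _); [apply Hp|lra]. Qed.
Lemma PrLe_nonneg M P n lam : is_process M P -> 0 <= PrLe M P n lam.
Proof. intros Hp. rewrite PrLe_B. apply lsum_nonneg. intros; destruct (leB _ _ _ _); [apply Hp|lra]. Qed.

Lemma PrGe_mono M P n l1 l2 : is_process M P -> l1 <= l2 -> PrGe M P n l2 <= PrGe M P n l1.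
Proof. intros Hp Hl. apply lsum_le_in. intros s _. pose proof (proj1 (proj2 Hp) s).
 repeat destruct (Rlt_dec _ _); repeat destruct (Rle_dec _ _); lra. Qed.
Lemma PrLe_mono M P n l1 l2 : is_process M P -> l1 <= l2 -> PrLe M P n l1 <= PrLe M P n l2.
Proof. intros Hp Hl. apply lsum_le_in. intros s _. pose proof (proj1 (proj2 Hp) s).
 repeat destruct (Rlt_dec _ _); repeat destruct (Rle_dec _ _); lra. Qed.

Lemma sup_above M P h lam : is_process M P -> is_sup_entropy M P h -> h < lam -> Un_cv (fun n => PrGe M P n lam) 0.
Proof. intros Hp [H1 H2] Hl. destruct (classic (exists x, Un_cv (fun n => PrGe M P n x) 0 /\ x <= lam)) as [[x [Hx Hxl]]|Hn].
 - apply (squeeze _ _ (ex_intro _ 0%nat (fun n _ => conj (PrGe_nonneg M P n lam Hp) (PrGe_mono M P n x lam Hp Hxl))) Hx).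
 - exfalso. assert (lam <= h). { apply H2. intros x Hx. destruct (Rle_or_lt lam x); auto. exfalso; apply Hn; exists x; split; auto; lra. } lra. Qed.

Lemma sup_below M P h lam : is_sup_entropy M P h -> lam < h -> ~ Un_cv (fun n => PrGe M P n lam) 0.
Proof. intros [H1 H2] Hl Hc. specialize (H1 lam Hc). lra. Qed.

Lemma inf_below M P h lam : is_process M P -> is_inf_entropy M P h -> lam < h -> Un_cv (fun n => PrLe M P n lam) 0.
Proof. intros Hp [H1 H2] Hl. destruct (classic (exists x, Un_cv (fun n => PrLe M P n x) 0 /\ lam <= x)) as [[x [Hx Hxl]]|Hn].
 - apply (squeeze _ _ (ex_intro _ 0%nat (fun n _ => conj (PrLe_nonneg M P n lam Hp) (PrLe_mono M P n lam x Hp Hxl))) Hx).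
 - exfalso. assert (h <= lam). { apply H2. intros x Hx. destruct (Rle_or_lt x lam); auto. exfalso; apply Hn; exists x; split; auto; lra. } lra. Qed.

Lemma inf_above M P h lam : is_inf_entropy M P h -> h < lam -> ~ Un_cv (fun n => PrLe M P n lam) 0.
Proof. intros [H1 H2] Hl Hc. specialize (H1 lam Hc). lra. Qed.

Lemma sum_pos_part M P n : is_process M P ->
  lsum (fun s => if Rlt_dec 0 (P s) then P s else 0) (words M n) = 1.
Proof. intros Hp. rewrite <- (proc_total M P n Hp). apply lsum_ext_in. intros s _.
 pose proof (proj1 (proj2 Hp) s). destruct (Rlt_dec _ _); lra. Qed.

Lemma not_cv_1 (u : nat -> R) : (forall n, (1 <= n)%nat -> 1 <= u n) -> ~ Un_cv u 0.
Proof. intros H Hc. destruct (Hc (1/2)) as [N HN]; [lra|]. specialize (HN (S N) ltac:(lia)). specialize (H (S N) ltac:(lia)).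
 unfold R_dist in HN. rewrite Rminus_0_r, Rabs_right in HN by lra. lra. Qed.

Lemma inf_le_sup M P hs hi : is_process M P -> is_sup_entropy M P hs -> is_inf_entropy M P hi -> hi <= hs.
Proof. intros Hp Hs Hi. destruct (Rle_or_lt hi hs) as [|Hl]; auto. exfalso.
 set (lam := (hi + hs) / 2).
 pose proof (sup_above M P hs lam Hp Hs ltac:(unfold lam; lra)) as C1.
 pose proof (inf_below M P hi lam Hp Hi ltac:(unfold lam; lra)) as C2.
 pose proof (CV_plus _ _ _ _ C1 C2) as C3. rewrite Rplus_0_r in C3. revert C3. apply not_cv_1. intros n Hn. rewrite <- (sum_pos_part M P n Hp). unfold PrGe, PrLe. rewrite <- lsum_plus. apply lsum_le_in. intros s _.
 pose proof (proj1 (proj2 Hp) s). repeat destruct (Rlt_dec _ _); repeat destruct (Rle_dec _ _); lra. Qed.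

Lemma sup_nonneg M P hs : is_process M P -> is_sup_entropy M P hs -> 0 <= hs.
Proof. intros Hp Hs. destruct (Rle_or_lt 0 hs) as [|Hl]; auto. exfalso.
 pose proof (sup_above M P hs (hs / 2) Hp Hs ltac:(lra)) as C1. revert C1. apply not_cv_1. intros n Hn. rewrite <- (sum_pos_part M P n Hp). unfold PrGe. apply lsum_le_in. intros s Hs'.
 pose proof (proj1 (proj2 Hp) s). pose proof (proc_le1 M P n s Hp Hs').
 destruct (Rlt_dec _ _) as [Ps|]; [|lra]. destruct (Rle_dec _ _) as [|G]; [lra|]. exfalso. apply G.
 assert (0 <= / INR n * log2 (/ P s)). { apply Rmult_le_pos. left; apply Rinv_0_lt_compat, lt_0_INR; lia.
   unfold log2. apply Rmult_le_pos; [|left; apply Rinv_0_lt_compat, ln2_pos]. rewrite ln_Rinv by auto.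
   destruct (Req_dec (P s) 1) as [->|]; [rewrite ln_1; lra|]. assert (Hl1 : ln (P s) < ln 1) by (apply ln_increasing; lra). rewrite ln_1 in Hl1. lra. }
 lra. Qed.

Lemma exp_le x y : x <= y -> exp x <= exp y.
Proof. intros [H|H]; [left; apply exp_increasing; auto|rewrite H; lra]. Qed.

Lemma nfloor_inf R' : 0 < R' -> forall K, exists N, forall n, (N <= n)%nat -> (K <= nfloor (INR n * R'))%nat.
Proof. intros HR K. destruct (arch ((INR K + 1) / R')) as [N HN]. exists N. intros n Hn. specialize (HN n Hn).
 assert (INR n * R' >= INR K + 1). { apply (Rmult_le_compat_r R') in HN; [|lra]. unfold Rdiv in HN.
   rewrite Rmult_assoc, Rinv_l, Rmult_1_r in HN by lra. lra. }
 pose proof (nfloor_spec (INR n * R') ltac:(pose proof (pos_INR n); nra)).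
 apply Nat.lt_le_incl, INR_lt. lra. Qed.

Section Main.
Variables (Mx My : nat) (PX PY : list nat -> R)
  (hX : is_process Mx PX) (hY : is_process My PY)
  (HXsup HXinf HYsup HYinf : R)
  (eXsup : is_sup_entropy Mx PX HXsup) (eXinf : is_inf_entropy Mx PX HXinf)
  (eYsup : is_sup_entropy My PY HYsup) (eYinf : is_inf_entropy My PY HYinf)
  (hpos : 0 < HXinf).

Lemma part_int : inf_le (int_rates Mx My PX PY) (HYsup / HXinf).
Proof. intros eps He. pose proof (sup_nonneg My PY HYsup hY eYsup) as HA.
 set (A := HYsup) in *. set (H := HXinf) in *.
 set (R' := A / H + eps / 2). set (lX := H * (A + H * eps / 4) / (A + H * eps / 2)). set (lY := A + H * eps / 8).
 assert (HHe : 0 < H * eps) by (apply Rmult_lt_0_compat; auto).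
 assert (HlX : 0 < lX < H). { unfold lX. split. apply Rdiv_lt_0_compat; nra.
   apply (Rmult_lt_reg_r (A + H * eps / 2)); [lra|]. unfold Rdiv. rewrite Rmult_assoc, Rinv_l, Rmult_1_r by lra. nra. }
 assert (HR'lX : R' * lX = A + H * eps / 4). { unfold R', lX. field. split; lra. }
 assert (HR' : 0 < R'). { unfold R'. assert (0 <= A / H) by (apply div_nonneg; lra). lra. }
 exists R'. split; [|unfold R'; lra]. split; [lra|].
 set (mm := fun n => nfloor (INR n * R')).
 set (a := ln 2 * (lY - R' * lX)). set (b := lX * ln 2).
 pose proof ln2_pos as L2.
 assert (Ha : a < 0). { unfold a. rewrite HR'lX. unfold lY. nra. }
 apply squeeze with (v := fun n => PrGe My PY n lY + PrLe Mx PX (mm n) lX + 4 * exp (a * INR n + b)).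
 - destruct (nfloor_inf R' HR' 1) as [N HN]. exists (Nat.max N 1). intros n Hn. split.
   + rewrite PrT_gt_Tgt. apply Tgt_nonneg; auto.
   + rewrite PrT_gt_Tgt. fold (mm n). eapply Rle_trans; [apply (int_ineq Mx My PX PY hX hY n (mm n) lX lY); [lia|apply HN; lia]|].
     apply Rplus_le_compat_l. rewrite Rmult_assoc. apply Rmult_le_compat_l; [lra|]. rewrite <- exp_plus. apply exp_le.
     pose proof (nfloor_spec (INR n * R') ltac:(pose proof (pos_INR n); nra)). fold (mm n) in H0.
     unfold a, b. assert (lX * (INR n * R' - 1) <= lX * INR (mm n)) by (apply Rmult_le_compat_l; lra).
     assert (ln 2 * (lX * (INR n * R' - 1)) <= ln 2 * (lX * INR (mm n))) by (apply Rmult_le_compat_l; lra). nra.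
 - rewrite <- (Rplus_0_r 0). apply CV_plus; [rewrite <- (Rplus_0_r 0); apply CV_plus|].
   + apply (sup_above My PY HYsup lY hY eYsup). unfold lY, A. lra.
   + apply (subseq (fun m => PrLe Mx PX m lX) mm). apply (inf_below Mx PX HXinf lX hX eXinf). exact (proj2 HlX).
     apply nfloor_inf; auto.
   + apply exp_decay; auto. Qed.


Lemma pick_lX (x h t : R) : 0 <= x -> 0 < h -> x * h < t -> exists l, h < l /\ x * l < t.
Proof. intros Hx Hh Ht. set (D := t - x * h). exists (h + D / (2 * (x + 1))). split.
 - assert (0 < D / (2 * (x + 1))) by (apply Rdiv_lt_0_compat; unfold D; lra). lra.
 - assert (x * (D / (2 * (x + 1))) < D / 2).
   { apply (Rmult_lt_reg_r (2 * (x + 1))); [lra|]. unfold Rdiv. field_simplify; [|lra]. unfold D in *. nra. }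
   unfold D in *. lra. Qed.

Lemma part_r1 x phi : (forall n, valid_algo Mx My PX PY n (phi n)) -> achievable Mx PX phi x -> HYsup / HXsup <= x.
Proof. intros Hv [Hx Hcv]. pose proof (inf_le_sup Mx PX HXsup HXinf hX eXsup eXinf) as Hsi.
 destruct (Rle_or_lt (HYsup / HXsup) x) as [|Hl]; auto. exfalso.
 assert (Hxs : x * HXsup < HYsup). { apply (Rmult_lt_compat_r HXsup) in Hl; [|lra]. unfold Rdiv in Hl.
   rewrite Rmult_assoc, Rinv_l, Rmult_1_r in Hl by lra. lra. }
 destruct (pick_lX x HXsup HYsup Hx ltac:(lra) Hxs) as [lX [HlX1 HlX2]].
 set (lY := (x * lX + HYsup) / 2).
 apply (sup_below My PY HYsup lY eYsup ltac:(unfold lY; lra)).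
 set (mm := fun n => nfloor (INR n * x)).
 set (g := fun n => if Nat.eqb (mm n) 0 then 0 else PrGe Mx PX (mm n) lX).
 apply squeeze with (v := fun n => PrT_gt Mx PX (phi n) (INR n * x) + g n).
 - exists 1%nat. intros n Hn. split. apply PrGe_nonneg; auto.
   rewrite PrT_gt_Tgt. apply lb1 with (R := x); auto; try lia; try lra.
   apply nfloor_spec. pose proof (pos_INR n); nra. unfold lY; lra.
 - rewrite <- (Rplus_0_r 0). apply CV_plus; auto.
   destruct (Req_dec x 0) as [->|Hx0].
   + apply squeeze with (v := fun _ => 0); [|apply cv_zero]. exists 0%nat. intros n _. unfold g, mm.
     replace (nfloor (INR n * 0)) with 0%nat. simpl; lra.
     rewrite Rmult_0_r. pose proof (nfloor_spec 0 (Rle_refl 0)). symmetry. apply INR_eq. simpl. pose proof (pos_INR (nfloor 0)). lra.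
   + apply squeeze with (v := fun n => PrGe Mx PX (mm n) lX).
     * exists 0%nat. intros n _. unfold g. destruct (Nat.eqb _ _). pose proof (PrGe_nonneg Mx PX (mm n) lX hX); lra.
       pose proof (PrGe_nonneg Mx PX (mm n) lX hX); lra.
     * apply (subseq (fun m => PrGe Mx PX m lX) mm). apply (sup_above Mx PX HXsup lX hX eXsup HlX1).
       apply nfloor_inf. lra. Qed.

Lemma part_r2 x phi : (forall n, valid_algo Mx My PX PY n (phi n)) -> achievable Mx PX phi x -> HYinf / HXinf <= x.
Proof. intros Hv [Hx Hcv].
 destruct (Rle_or_lt (HYinf / HXinf) x) as [|Hl]; auto. exfalso.
 assert (Hxs : x * HXinf < HYinf). { apply (Rmult_lt_compat_r HXinf) in Hl; [|lra]. unfold Rdiv in Hl.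
   rewrite Rmult_assoc, Rinv_l, Rmult_1_r in Hl by lra. lra. }
 destruct (pick_lX x HXinf HYinf Hx ltac:(lra) Hxs) as [lX [HlX1 HlX2]].
 set (lY := (x * lX + HYinf) / 2).
 assert (HlX0 : 0 < lX) by lra.
 set (R' := (x + lY / lX) / 2).
 assert (HxlY : x < lY / lX). { apply (Rmult_lt_reg_r lX); auto. unfold Rdiv. rewrite Rmult_assoc, Rinv_l, Rmult_1_r by lra. unfold lY; lra. }
 assert (HxR : x < R') by (unfold R'; lra).
 assert (HR'lX : R' * lX < lY). { apply (Rmult_lt_reg_r (/ lX)). apply Rinv_0_lt_compat; lra.
   rewrite Rmult_assoc, Rinv_r, Rmult_1_r by lra. fold (lY / lX). unfold R'. lra. }
 apply (inf_above Mx PX HXinf lX eXinf HlX1).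
 set (nn := fun m => S (nfloor (INR m / R'))).
 assert (Hnn : forall m, INR m < INR (nn m) * R' /\ INR (nn m) <= INR m / R' + 1).
 { intros m. unfold nn. rewrite S_INR. assert (0 <= INR m / R') by (apply div_nonneg; [apply pos_INR|lra]).
   pose proof (nfloor_spec _ H). split; [|lra].
   apply Rle_lt_trans with ((INR m / R') * R'). right. field. lra.
   apply Rmult_lt_compat_r; lra. }
 assert (Hnninf : forall K, exists N, forall m, (N <= m)%nat -> (K <= nn m)%nat).
 { intros K. destruct (arch (INR K * R')) as [N HN]. exists N. intros m Hm. specialize (HN m Hm).
   destruct (Hnn m) as [H1 _]. apply Nat.lt_le_incl, INR_lt.
   apply (Rmult_lt_reg_r R'); lra. }
 apply squeeze with (v := fun m => PrT_gt Mx PX (phi (nn m)) (INR (nn m) * x) + PrLe My PY (nn m) lY).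
 - destruct (arch (x * R' / (R' - x))) as [N HN]. exists (Nat.max N 1). intros m Hm. split. apply PrLe_nonneg; auto.
   destruct (Hnn m) as [H1 H2].
   eapply Rle_trans; [apply (lb2 Mx My PX PY (nn m) (phi (nn m)) m lX lY); auto|].
   + unfold nn; lia.
   + lia.
   + apply Rle_lt_trans with (INR (nn m) * R' * lX). apply Rmult_le_compat_r; lra.
     rewrite Rmult_assoc. apply Rmult_lt_compat_l; auto. apply lt_0_INR. unfold nn; lia.
   + apply Rplus_le_compat_r. rewrite PrT_gt_Tgt. apply Tgt_mono; auto. apply nfloor_le.
     pose proof (pos_INR (nn m)); nra.
     specialize (HN m ltac:(lia)).
     assert (x <= INR m * ((R' - x) / R')).
     { apply (Rmult_le_compat_r ((R' - x) / R')) in HN; [|apply div_nonneg; lra].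
       replace (x * R' / (R' - x) * ((R' - x) / R')) with x in HN by (field; lra). lra. }
     assert (H3 : INR (nn m) * x <= (INR m / R' + 1) * x) by (apply Rmult_le_compat_r; lra).
     replace ((INR m / R' + 1) * x) with (INR m - INR m * ((R' - x) / R') + x) in H3 by (field; lra). lra.
 - rewrite <- (Rplus_0_r 0). apply CV_plus.
   + apply (subseq (fun n => PrT_gt Mx PX (phi n) (INR n * x)) nn); auto.
   + apply (subseq (fun n => PrLe My PY n lY) nn); auto. apply (inf_below My PY HYinf lY hY eYinf). unfold lY; lra. Qed.

End Main.

Theorem theorem3 (Mx My : nat) (PX PY : list nat -> R)
  (hX : is_process Mx PX) (hY : is_process My PY)
  (HXsup HXinf HYsup HYinf : R)
  (eXsup : is_sup_entropy Mx PX HXsup) (eXinf : is_inf_entropy Mx PX HXinf)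
  (eYsup : is_sup_entropy My PY HYsup) (eYinf : is_inf_entropy My PY HYinf)
  (hpos : 0 < HXinf) :
  inf_le (int_rates Mx My PX PY) (HYsup / HXinf) /\
  inf_ge (opt_rates Mx My PX PY) (Rmax (HYsup / HXsup) (HYinf / HXinf)).
Proof. split.
 - exact (part_int Mx My PX PY hX hY HXinf HYsup eXinf eYsup hpos).
 - intros x [phi [Hv Ha]]. apply Rmax_lub.
   + exact (part_r1 Mx My PX PY hX hY HXsup HXinf HYsup eXsup eXinf eYsup hpos x phi Hv Ha).
   + exact (part_r2 Mx My PX PY hX hY HXinf HYinf eXinf eYinf hpos x phi Hv Ha).
Qed.
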